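(* Let $n\in\mathbb{N}^*$ and let $c\in\mathfrak{S}_{n+1}$ be a Coxeter element. The map $\Phi_c$, which sends $\boldsymbol\pi=(\pi^k)_{1\le k\le n}\in\mathcal{ST}(c)$ to the filling of $\boldsymbol\lambda(c)$ whose value at the box $\langle k,\delta\rangle_{\boldsymbol\lambda(c)}$ is $\pi^k_\delta$ (the $\delta$-th part of $\pi^k$, zero if $\delta>\ell(\pi^k)$), is a bijection from $\mathcal{ST}(c)$ onto $\mathrm{RPP}(\boldsymbol\lambda(c))$.
   Context: Coxeter element of $\mathfrak{S}_{n+1}$: product of $s_1,\dots,s_n$ ($s_i=(i,i+1)$), each exactly once; it is a long cycle $(c_1=1<c_2<\dots<c_m=n+1>c_{m+1}>\dots>c_{n+1})$, with $\mathbf L_c=\{c_2,\dots,c_{m-1}\}$, $\mathbf R_c=\{c_{m+1},\dots,c_{n+1}\}$. With $\mathbf L=\mathbf L_c\cup\{1\}=\{\ell_1<\dots<\ell_p\}$ and $\mathbf R=\mathbf R_c\cup\{n+1\}$, $\boldsymbol\lambda(c)$ is the partition with parts $\#\{r\in\mathbf R:\ell_i<r\}$. For a partition $\lambda$: $\mathrm{Fer}(\lambda)=\{(i,j):j\le\lambda_i\}$; $D_k(\lambda)=\{(i,j)\in\mathrm{Fer}(\lambda):\lambda_1+i-j=k\}$; $\delta_k=\max\{\min(i,j):(i,j)\in D_k(\lambda)\}$; the box $(i,j)\in D_k(\lambda)$ has coordinates $\langle k,\delta\rangle_\lambda$ with $\delta=\delta_k-\min(i,j)+1$. $\mathrm{RPP}(\lambda)$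 is the set of maps $\mathrm{Fer}(\lambda)\to\mathbb{N}$ weakly increasing for the componentwise order. Storability: a pair of partitions $(\lambda,\mu)$ (padded with zeros) is storable if $\lambda_i\ge\mu_i\ge\lambda_{i+1}$ for all $i\ge1$. A triple $(\lambda,\mu,\nu)$ is $(\boxplus,\boxplus)$-storable if $(\lambda,\mu),(\nu,\mu)$ are storable; $(\boxplus,\boxminus)$ if $(\lambda,\mu),(\mu,\nu)$ are; $(\boxminus,\boxplus)$ if $(\mu,\lambda),(\nu,\mu)$ are; $(\boxminus,\boxminus)$ if $(\mu,\lambda),(\mu,\nu)$ are. For $\boldsymbol\pi=(\pi^1,\dots,\pi^n)$ set $\pi^0=\pi^{n+1}=(0)$; $\boldsymbol\pi$ is $X$-storable at $i$ if $(\pi^{i-1},\pi^i,\pi^{i+1})$ is. With $\mathbf R[-1]=\{r-1:r\in\mathbf R\}$, $\boldsymbol\pi\in\mathcal{ST}(c)$ means that for each $i\in\{1,\dots,n\}$: $(\boxplus,\boxplus)$-storable at $i$ if $i\notin\mathbf L\cup\mathbf R[-1]$; $(\boxplus,\boxminus)$ at $i$ if $i\in\mathbf R[-1]\setminus\mathbf L$; $(\boxminus,\boxplus)$ at $i$ if $i\in\mathbf L\setminus\mathbf R[-1]$; $(\boxminus,\boxminus)$ at $i$ if $i\in\mathbf L\cap\mathbf R[-1]$; and $\pi^k=(0)$ for $k\notin\{\min\mathbf L,\dots,\max\mathbf R\}$. (For such $\boldsymbol\pi$, $\ell(\pi^k)\le\#D_k(\boldsymbol\lambda(c))$, so $\Phi_c$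 is well defined.) *)

(* Defs.v *)
From mathcomp Require Import all_boot all_order all_fingroup.
Set Implicit Arguments. Unset Strict Implicit. Unset Printing Implicit Defensive.

(* Points 1..n+1 of the paper are the ordinals 0..n of 'I_(n.+1). *)

(* s_(i+1) = (i+1, i+2) in 1-based notation, for i : 'I_n *)
Definition simple_tr (n : nat) (i : 'I_n) : 'S_(n.+1) :=
  tperm (widen_ord (leqnSn n) i) (lift ord0 i).

Definition coxeter_element (n : nat) (c : 'S_(n.+1)) : Prop :=
  exists sigma : 'S_n, c = (\prod_(i < n) simple_tr (sigma i))%g.

(* c acting on the 1-based points 1..n+1 *)
Definition cnat (n : nat) (c : 'S_(n.+1)) (x : nat) : nat :=
  (val (c (inord x.-1))).+1.

(* L = L_c u {1}: the points c^k(1) visited before reaching n+1 *)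
Definition inL (n : nat) (c : 'S_(n.+1)) (x : nat) : bool :=
  [exists k : 'I_(n.+2), (iter k (cnat c) 1 == x) &&
     [forall j : 'I_(n.+2), (j <= k) ==> (iter j (cnat c) 1 != n.+1)]].

(* R = R_c u {n+1}: the points c^k(n+1) visited before coming back to 1 *)
Definition inR (n : nat) (c : 'S_(n.+1)) (x : nat) : bool :=
  [exists k : 'I_(n.+2), (iter k (cnat c) n.+1 == x) &&
     [forall j : 'I_(n.+2), ((0 < j) && (j <= k)) ==> (iter j (cnat c) n.+1 != 1)]].

Definition Lseq (n : nat) (c : 'S_(n.+1)) : seq nat :=
  [seq x <- iota 1 n.+1 | inL c x].
Definition Rseq (n : nat) (c : 'S_(n.+1)) : seq nat :=
  [seq x <- iota 1 n.+1 | inR c x].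

Definition lambda_c (n : nat) (c : 'S_(n.+1)) : seq nat :=
  [seq count (fun r => inR c r && (l < r)) (iota 1 n.+1) | l <- Lseq c].

(* A partition is a weakly decreasing list of positive parts; the zero
   partition (0) is [::]; lambda_i = nth 0 lambda (i-1) (padding by zeros). *)
Definition is_partition (s : seq nat) : bool :=
  sorted geq s && all (fun x => 0 < x) s.

Definition in_Fer (la : seq nat) (i j : nat) : bool :=
  (0 < i) && (0 < j) && (j <= nth 0 la i.-1).

(* RPP(la): fillings of Fer(la) weakly increasing for the componentwise order;
   a filling is encoded as a function nat -> nat -> nat vanishing off Fer(la). *)
Definition is_RPP (la : seq nat) (f : nat -> nat -> nat) : Prop :=
  (forall i j, ~~ in_Fer la i j -> f i j = 0) /\
  (forall i j i' j', in_Fer la i j -> in_Fer la i' j' ->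
       i <= i' -> j <= j' -> f i j <= f i' j').

Definition diag_index (la : seq nat) (i j : nat) : nat := nth 0 la 0 + i - j.

Definition delta_k (la : seq nat) (k : nat) : nat :=
  \max_(i < size la) \max_(j < nth 0 la i | diag_index la i.+1 j.+1 == k)
      minn i.+1 j.+1.

Definition box_k (la : seq nat) (i j : nat) : nat := diag_index la i j.
Definition box_delta (la : seq nat) (i j : nat) : nat :=
  delta_k la (diag_index la i j) - minn i j + 1.

Definition storable (la mu : seq nat) : Prop :=
  forall i : nat, nth 0 mu i <= nth 0 la i /\ nth 0 la i.+1 <= nth 0 mu i.

Definition st_pp (la mu nu : seq nat) : Prop := storable la mu /\ storable nu mu.
Definition st_pm (la mu nu : seq nat) : Prop := storable la mu /\ storable mu nu.
Definition st_mp (la mu nu : seq nat) : Prop := storable mu la /\ storable nu mu.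
Definition st_mm (la mu nu : seq nat) : Prop := storable mu la /\ storable mu nu.

(* pi^k for pi = (pi^1,...,pi^n), with pi^0 = pi^{n+1} = (0) *)
Definition pi_at (n : nat) (pi : n.-tuple (seq nat)) (k : nat) : seq nat :=
  if k is k'.+1 then nth [::] pi k' else [::].

Definition in_ST (n : nat) (c : 'S_(n.+1)) (pi : n.-tuple (seq nat)) : Prop :=
  (forall k, 1 <= k <= n -> is_partition (pi_at pi k)) /\
  (forall i, 1 <= i <= n ->
     let t := (pi_at pi i.-1, pi_at pi i, pi_at pi i.+1) in
     let iL := inL c i in
     let iR1 := inR c i.+1 in   (* i in R[-1] *)
     (~~ iL -> ~~ iR1 -> st_pp t.1.1 t.1.2 t.2) /\
     (~~ iL -> iR1 -> st_pm t.1.1 t.1.2 t.2) /\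
     (iL -> ~~ iR1 -> st_mp t.1.1 t.1.2 t.2) /\
     (iL -> iR1 -> st_mm t.1.1 t.1.2 t.2)) /\
  (forall k, 1 <= k <= n ->
     ~~ (head 0 (Lseq c) <= k <= last 0 (Rseq c)) -> pi_at pi k = [::]).

Definition Phi_c (n : nat) (c : 'S_(n.+1)) (pi : n.-tuple (seq nat))
    : nat -> nat -> nat :=
  fun i j =>
    let la := lambda_c c in
    if in_Fer la i j then
      nth 0 (pi_at pi (box_k la i j)) (box_delta la i j).-1
    else 0.

(* Main.v *)
Require Import Defs.
From mathcomp Require Import all_boot all_order all_fingroup.
From mathcomp Require Import zify.
From Stdlib Require Import FunctionalExtensionality.
Set Implicit Arguments. Unset Strict Implicit. Unset Printing Implicit Defensive.

Lemma betw_trans n (P : 'I_n -> Prop) (x y z : nat) :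
  (forall e : 'I_n, (x <= e < y) || (y <= e < x) -> P e) ->
  (forall e : 'I_n, (y <= e < z) || (z <= e < y) -> P e) ->
  (forall e : 'I_n, (x <= e < z) || (z <= e < x) -> P e).
Proof.
move=> H1 H2 e He.
have [h|h] : ((x <= e < y) || (y <= e < x)) \/ ((y <= e < z) || (z <= e < y)).
  case: (leqP y e) => Hy; case: (leqP x e) => Hx; case: (leqP z e) => Hz;
  move: He; rewrite ?Hy ?Hx ?Hz /=; lia.
- exact: H1.
- exact: H2.
Qed.

Lemma prod_inv n (r : seq 'I_n) : uniq r ->
  (forall (y z : 'I_n.+1), y \in porbit (\prod_(a <- r) simple_tr a)%g z ->
     forall e : 'I_n, (y <= e < z) || (z <= e < y) -> e \in r) /\
  #|porbits (\prod_(a <- r) simple_tr a)%g| + size r = n.+1.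
Proof.
elim: r => [|a r IH] /=.
  rewrite big_nil; split.
    move=> y z /porbitP [i ->]; rewrite expg1n perm1 => e; lia.
  rewrite addn0 /porbits card_imset ?card_ord //.
  move=> x y E; apply/eqP; rewrite -[x == y]/(x == y).
  have : x \in porbit 1 y by rewrite -E porbit_id.
  by move/porbitP => [i ->]; rewrite expg1n perm1.
case/andP => anr ur; have [Hinv Hcnt] := IH ur.
rewrite big_cons.
set s := (\prod_(a0 <- r) simple_tr a0)%g.
set t := simple_tr a.
have Ht : forall w : 'I_n.+1, forall e : 'I_n, (w <= e < t w) || (t w <= e < w) -> e \in a :: r.
  move=> w e; rewrite /t /simple_tr; case: tpermP => [->|->|_ _].
  - rewrite /= /bump /= => He; have -> : e = a by apply/val_inj; move: He => /=; lia.
    by rewrite inE eqxx.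
  - rewrite /= /bump /= => He; have -> : e = a by apply/val_inj; move: He => /=; lia.
    by rewrite inE eqxx.
  - lia.
split.
  move=> y z /porbitP [i ->]; elim: i => [|i IHi].
    rewrite expg0 perm1 => e; lia.
  rewrite expgSr permM.
  set w := (((t * s) ^+ i)%g z).
  rewrite permM.
  apply: (betw_trans (y := val (t w))); last first.
    apply: (betw_trans (y := val w)).
      move=> e He; apply: (Ht w e); move: He; rewrite orbC; done.
    exact: IHi.
  move=> e He; rewrite inE; apply/orP; right.
  apply: (Hinv (s (t w)) (t w)) => //.
  by have := mem_porbit s 1 (t w); rewrite expg1.
have := porbits_mul_tperm s (widen_ord (leqnSn n) a) (lift ord0 a).
rewrite -/(simple_tr a) -/t.
have -> : (widen_ord (leqnSn n) a \notin porbit s (lift ord0 a)) = true.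
  apply/negP => /Hinv /(_ a) H.
  by move: anr; rewrite H //= /bump /=; lia.
have -> : (widen_ord (leqnSn n) a != lift ord0 a) = true.
  apply/negP => /eqP /(congr1 val) /= ; rewrite /bump /= => h; lia.
move=> H2; move: Hcnt; rewrite -/s; cbv zeta in H2; simpl in H2. move=> H1. transitivity (#|porbits s| + size r); last exact: H1. apply/eqP; rewrite addnS -addSn eqn_add2r -addn1 -(eqn_add2r 1) -addnA; apply/eqP; exact: H2.
Qed.

Lemma cox_single n (c : 'S_(n.+1)) : coxeter_element c ->
  (forall y, y \in porbit c ord0) /\ #|porbit c ord0| = n.+1.
Proof.
case=> sigma ->.
set c' := (\prod_(i < n) simple_tr (sigma i))%g.
have Hc : c' = (\prod_(a <- map sigma (index_enum 'I_n)) simple_tr a)%g.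
  by rewrite big_map.
have ur : uniq (map sigma (index_enum 'I_n)).
  by rewrite map_inj_uniq ?index_enum_uniq //; apply: perm_inj.
have [_ Hcnt] := prod_inv ur.
have Hsz : size (index_enum 'I_n) = n by rewrite /index_enum unlock /= -enumT size_enum_ord.
  rewrite size_map Hsz -Hc in Hcnt.
have : #|porbits c'| == 1 by apply/eqP; lia.
case/cards1P => P HP.
have Hall : forall y, y \in porbit c' ord0.
  move=> y.
  have h1 : porbit c' y \in porbits c' by apply: imset_f.
  have h2 : porbit c' ord0 \in porbits c' by apply: imset_f.
  move: h1 h2; rewrite HP !inE => /eqP h1 /eqP h2.
  by rewrite h2 -h1 porbit_id.
split => //.
have -> : porbit c' ord0 = [set: 'I_n.+1] by apply/setP => y; rewrite inE Hall.
by rewrite cardsT card_ord.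
Qed.


Section Cyc.
Variables (n : nat) (c : 'S_(n.+1)).
Hypothesis n0 : 0 < n.
Hypothesis Hall : forall y, y \in porbit c ord0.
Hypothesis Hcard : #|porbit c ord0| = n.+1.

Lemma iter_cnat k (y : 'I_n.+1) : iter k (cnat c) (val y).+1 = (val (iter k c y)).+1.
Proof.
elim: k => [|k IH] //=; rewrite IH /cnat /=; congr (_.+1); by rewrite inord_val.
Qed.

Lemma iter_inj a b : a < n.+1 -> b < n.+1 -> iter a c ord0 = iter b c ord0 -> a = b.
Proof.
move=> ha hb E.
have U := uniq_traject_porbit c ord0; rewrite Hcard in U.
rewrite -(nth_traject c ha ord0) -(nth_traject c hb ord0) in E.
apply/eqP; rewrite -(nth_uniq ord0 _ _ U) ?size_traject //; exact/eqP.
Qed.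

Lemma iter_surj y : exists2 k, k < n.+1 & iter k c ord0 = y.
Proof.
have := Hall y; rewrite porbit_traject Hcard => Hy.
have hi : index y (traject c ord0 n.+1) < n.+1.
  by have := index_mem y (traject c ord0 n.+1); rewrite size_traject Hy.
exists (index y (traject c ord0 n.+1)) => //.
by rewrite -(nth_traject c hi ord0) nth_index.
Qed.

Lemma iterN : iter n.+1 c ord0 = ord0.
Proof. by have := iter_porbit c ord0; rewrite Hcard. Qed.

Lemma iter_max_ex : exists2 m, 0 < m < n.+1 & iter m c ord0 = ord_max.
Proof.
have [m hm E] := iter_surj ord_max; exists m => //.
case: m hm E => [|m] //= _ E.
by move: (congr1 val E) => /=; lia.
Qed.

Variable m : nat.
Hypothesis hm : 0 < m < n.+1.
Hypothesis Em : iter m c ord0 = ord_max.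

Lemma iter_cnat0 k : iter k (cnat c) 1 = (val (iter k c ord0)).+1.
Proof. exact: (iter_cnat k ord0). Qed.
Lemma iter_cnatM k : iter k (cnat c) n.+1 = (val (iter (k + m) c ord0)).+1.
Proof. by rewrite iterD Em -iter_cnat. Qed.

Lemma inL_iff y k0 : k0 < n.+1 -> iter k0 c ord0 = y -> inL c (val y).+1 = (k0 < m).
Proof.
move=> hk0 E0; apply/idP/idP.
  case/existsP => k /andP [/eqP Hk /forallP Hj].
  rewrite iter_cnat0 in Hk; case: Hk => /val_inj Hk.
  have km : k < m.
    rewrite ltnNge; apply/negP => mk.
    have hm2 : m < n.+2 by lia.
    have := Hj (Ordinal hm2); rewrite /= mk /= iter_cnat0 Em /=; by rewrite eqxx.
  have -> : k0 = k by apply: iter_inj => //; [lia | rewrite E0 Hk].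
  exact: km.
move=> k0m; apply/existsP.
have hk2 : k0 < n.+2 by lia.
exists (Ordinal hk2); rewrite /= iter_cnat0 E0 eqxx /=.
apply/forallP => j; apply/implyP => jk; rewrite iter_cnat0.
apply/negP => /eqP [] Ej.
have : (j : nat) = m by apply: iter_inj; [lia | lia | rewrite Em; exact/val_inj].
lia.
Qed.

Lemma inR_iff y k0 : k0 < n.+1 -> iter k0 c ord0 = y -> inR c (val y).+1 = (m <= k0).
Proof.
move=> hk0 E0; apply/idP/idP.
  case/existsP => k /andP [/eqP Hk /forallP Hj].
  rewrite iter_cnatM in Hk; case: Hk => /val_inj Hk.
  case: (leqP n.+1 (k + m)) => km.
    have hj : n.+1 - m < n.+2 by lia.
    have := Hj (Ordinal hj); rewrite /= iter_cnatM.
    have -> : n.+1 - m + m = n.+1 by lia.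
    rewrite iterN /= => H.
    move: H; rewrite implybF; lia.
  have -> : k0 = k + m by apply: iter_inj => //; rewrite E0 Hk.
  lia.
move=> mk0; apply/existsP.
have hk2 : k0 - m < n.+2 by lia.
exists (Ordinal hk2); rewrite /= iter_cnatM.
have -> : k0 - m + m = k0 by lia.
rewrite E0 eqxx /=.
apply/forallP => j; apply/implyP => /andP [j0 jk]; rewrite iter_cnatM.
apply/negP => /eqP [] Ej.
have : (j + m = 0)%N by apply: iter_inj; [lia | lia | exact/val_inj].
lia.
Qed.

Lemma LR_compl x : 1 <= x <= n.+1 -> inR c x = ~~ inL c x.
Proof.
move=> hx.
have [k0 hk0 E0] := iter_surj (inord x.-1).
have Ex : x = (val (@inord n x.-1)).+1 by rewrite /= inordK; lia.
rewrite Ex (inL_iff hk0 E0) (inR_iff hk0 E0); lia.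
Qed.

Lemma inL1 : inL c 1.
Proof. by rewrite -[1]/((val (@ord0 n)).+1) (inL_iff (k0 := 0)) //; lia. Qed.

Lemma inRN : inR c n.+1.
Proof.
have -> : n.+1 = (val (@ord_max n)).+1 by [].
by rewrite (inR_iff (k0 := m)) //; lia.
Qed.

End Cyc.


Lemma nth_filter_iota (P : pred nat) N a i : i < count P (iota a N) ->
  [/\ a <= nth 0 (filter P (iota a N)) i, nth 0 (filter P (iota a N)) i < a + N,
      P (nth 0 (filter P (iota a N)) i) &
      count P (iota a (nth 0 (filter P (iota a N)) i - a)) = i].
Proof.
elim: N a i => [|N IH] a i //=.
case Pa: (P a) => /=.
  case: i => [|i] /= h.
    by rewrite Pa subnn; split => //; lia.
  have [h1 h2 h3 h4] := IH a.+1 i ltac:(lia).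
  split => //; try lia.
  have -> : nth 0 (filter P (iota a.+1 N)) i - a = (nth 0 (filter P (iota a.+1 N)) i - a.+1).+1 by lia.
  by rewrite /= Pa h4.
move=> h; have [h1 h2 h3 h4] := IH a.+1 i ltac:(lia).
split => //; try lia.
have -> : nth 0 (filter P (iota a.+1 N)) i - a = (nth 0 (filter P (iota a.+1 N)) i - a.+1).+1 by lia.
by rewrite /= Pa h4.
Qed.




Lemma RPP_of_adj la (g : nat -> nat -> nat) :
  (forall i j, ~~ in_Fer la i j -> g i j = 0) ->
  (forall i j i' j', in_Fer la i' j' -> 0 < i <= i' -> 0 < j <= j' -> in_Fer la i j) ->
  (forall i j, in_Fer la i j -> in_Fer la i.+1 j -> g i j <= g i.+1 j) ->
  (forall i j, in_Fer la i j -> in_Fer la i j.+1 -> g i j <= g i j.+1) ->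
  is_RPP la g.
Proof.
move=> H0 Hd Hv Hh; split => // i j i' j' F1 F2 hi hj.
have [i0 j0] : 0 < i /\ 0 < j by move: F1; rewrite /in_Fer => /andP [/andP [-> ->]].
have S1 : forall d, j + d <= j' -> g i j <= g i (j + d).
  elim=> [|d IH] h; first by rewrite addn0.
  apply: leq_trans (IH _) _; first lia.
  rewrite addnS; apply: Hh; apply: (Hd _ _ i' j') => //; lia.
have S2 : forall d, i + d <= i' -> g i j' <= g (i + d) j'.
  elim=> [|d IH] h; first by rewrite addn0.
  apply: leq_trans (IH _) _; first lia.
  rewrite addnS; apply: Hv; apply: (Hd _ _ i' j') => //; lia.
apply: leq_trans (S1 (j' - j) _) _; first lia.
rewrite subnKC //; have := S2 (i' - i); rewrite subnKC //; apply; lia.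
Qed.

Lemma size_le_nth (s : seq nat) m : all (fun x => 0 < x) s -> nth 0 s m = 0 -> size s <= m.
Proof.
move=> /allP H E; rewrite leqNgt; apply/negP => h.
by have := H _ (mem_nth 0 h); rewrite E.
Qed.

Lemma pos_eq (s s' : seq nat) : all (fun x => 0 < x) s -> all (fun x => 0 < x) s' ->
  (forall t, nth 0 s t = nth 0 s' t) -> s = s'.
Proof.
move=> Hs Hs' E.
have e1 : size s <= size s' by apply: size_le_nth => //; rewrite E nth_default.
have e2 : size s' <= size s by apply: size_le_nth => //; rewrite -E nth_default.
apply: (eq_from_nth (x0 := 0)) => [|t _]; [lia | exact: E].
Qed.

Section Comb.
Variables (n : nat) (c : 'S_(n.+1)).
Hypothesis n0 : 0 < n.
Hypothesis HLR : forall x, 1 <= x <= n.+1 -> inR c x = ~~ inL c x.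
Hypothesis HL1 : inL c 1.
Hypothesis HRN : inR c n.+1.

Definition AA x := count (inL c) (iota 1 x).
Definition Rn := count (inR c) (iota 1 n.+1).
Definition BB k := Rn + AA k - k.
Local Notation la := (lambda_c c).

Lemma iota1S x : iota 1 x.+1 = rcons (iota 1 x) x.+1.
Proof. by have := iotaD 1 x 1; rewrite addn1 => ->; rewrite cats1 add1n. Qed.

Lemma AS x : AA x.+1 = AA x + inL c x.+1.
Proof. by rewrite /AA iota1S -cats1 count_cat /= addn0. Qed.

Lemma A0 : AA 0 = 0. Proof. by []. Qed.
Lemma A1 : AA 1 = 1. Proof. by rewrite /AA /= HL1. Qed.

Lemma Ale x : AA x <= x.
Proof. by rewrite /AA -{2}(size_iota 1 x) count_size. Qed.

Lemma Alip x d : AA x <= AA (x + d) <= AA x + d.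
Proof.
elim: d => [|d IH]; first by rewrite !addn0 leqnn.
rewrite addnS AS; case: (inL c _) => /=; lia.
Qed.

Lemma Amono x y : x <= y -> AA x <= AA y.
Proof. move=> h; have := Alip x (y - x); rewrite subnKC //; lia. Qed.

Lemma Alip2 x y : x <= y -> AA y <= AA x + (y - x).
Proof. move=> h; have := Alip x (y - x); rewrite subnKC //; lia. Qed.

Lemma countR x : x <= n.+1 -> count (inR c) (iota 1 x) + AA x = x.
Proof.
move=> hx; rewrite /AA.
rewrite -(eq_in_count (a1 := predC (inL c))); last first.
  move=> z; rewrite mem_iota => hz /=; rewrite HLR //; lia.
by rewrite addnC count_predC size_iota.
Qed.

Lemma RnA : Rn + AA n.+1 = n.+1.
Proof. exact: countR. Qed.

Lemma LN : inL c n.+1 = false.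
Proof. by move: HRN; rewrite HLR ?leqnn //; case: (inL c _). Qed.

Lemma AN : AA n.+1 = AA n.
Proof. by rewrite AS LN addn0. Qed.

Lemma Rbig k : k <= n.+1 -> k <= Rn + AA k.
Proof.
move=> hk; have := countR hk; have := countR (leqnn n.+1).
have : count (inR c) (iota 1 k) <= count (inR c) (iota 1 n.+1).
  rewrite -(subnKC hk) iotaD count_cat; lia.
rewrite -/Rn; lia.
Qed.

Lemma Rbig2 k : k <= n -> k.+1 <= Rn + AA k.
Proof.
move=> hk; have := Alip2 hk; have := RnA; rewrite AN; lia.
Qed.

Lemma Rsmall k : Rn + AA k <= n.+1 + (AA k - AA n.+1).
Proof. have := RnA; lia. Qed.

Lemma factsA k : k <= n.+1 ->
  [/\ AA k <= k, k <= Rn + AA k, AA k <= AA n.+1 & Rn + AA n.+1 = n.+1].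
Proof. move=> hk; split; [exact: Ale | exact: Rbig | exact: Amono | exact: RnA]. Qed.

Lemma count_gt l : l <= n.+1 ->
  count (fun r => inR c r && (l < r)) (iota 1 n.+1) = Rn - (l - AA l).
Proof.
move=> hl.
have E : iota 1 n.+1 = iota 1 l ++ iota (1 + l) (n.+1 - l) by rewrite -iotaD subnKC.
have := countR hl.
rewrite /Rn E !count_cat.
rewrite (eq_in_count (a1 := fun r => inR c r && (l < r)) (a2 := pred0)); last first.
  move=> z; rewrite mem_iota => hz /=; apply/negbTE; lia.
rewrite (eq_in_count (a1 := fun r => inR c r && (l < r)) (a2 := inR c) (s := iota (1 + l) _)); last first.
  move=> z; rewrite mem_iota => hz /=; have -> : l < z by lia. by rewrite andbT.
rewrite count_pred0. set X := count (inR c) (iota 1 l). set Y := count _ (iota (1 + l) _). clearbody X Y. move=> H. lia.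
Qed.

Lemma size_la : size la = AA n.+1.
Proof. by rewrite /lambda_c size_map /Lseq size_filter. Qed.

Lemma Lnth i : i < AA n.+1 ->
  let l := nth 0 (Lseq c) i in
  [/\ 1 <= l <= n.+1, AA l = i.+1, AA (l - 1) = i & nth 0 la i = Rn - (l - i.+1)].
Proof.
move=> hi /=.
have [h1 h2 h3 h4] := nth_filter_iota hi.
rewrite -/(Lseq c) in h1 h2 h3 h4.
set l := nth 0 (Lseq c) i in h1 h2 h3 h4 *.
have Al : AA l = i.+1.
  have -> : l = (l - 1).+1 by lia.
  by rewrite AS /AA h4 -(_ : l = (l - 1).+1) ?h3 ?addn1 //; lia.
split => //; first lia.
rewrite /lambda_c (nth_map 0); last by rewrite /Lseq size_filter.
rewrite count_gt; [by rewrite Al | lia].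
Qed.

Lemma FerChar i j : in_Fer la i j =
  [&& 0 < i, 0 < j, j < Rn + i, Rn + i - j <= n & i <= AA (Rn + i - j)].
Proof.
rewrite /in_Fer; case: (posnP i) => [->|i0] //=; case: (posnP j) => [->|j0] //=.
have [hN _ _ _] := factsA (leqnn n.+1).
have RA := RnA.
case: (ltnP i.-1 (size la)) => hi.
  rewrite size_la in hi.
  have [hl Al Al1 El] := Lnth hi; rewrite El.
  set l := nth 0 (Lseq c) i.-1 in hl Al Al1 El *.
  have Ll : AA l <= l := Ale l.
  apply/idP/idP => H.
    have hk : l <= Rn + i - j by lia.
    have := Amono hk; lia.
  case/and3P: H => H1 H2 H3.
  have hk : l <= Rn + i - j.
    rewrite leqNgt; apply/negP => hlt.
    have : AA (Rn + i - j) <= AA (l - 1) by apply: Amono; lia.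
    rewrite Al1.
    lia.
  lia.
rewrite nth_default //; have -> : (j <= 0) = false by lia.
apply/esym/negP => /and3P [H1 H2 H3].
rewrite size_la in hi.
have := Amono H2; have := Amono (leqnSn n); lia.
Qed.


Lemma la0 : nth 0 la 0 = Rn.
Proof.
have h0 : 0 < AA n.+1 by have := Amono (ltn0Sn n); rewrite A1.
have [hl Al Al1 El] := Lnth h0; rewrite El.
set l := nth 0 (Lseq c) 0 in hl Al Al1 El *.
have : l <= 1.
  rewrite leqNgt; apply/negP => h; have := Amono (_ : 1 <= l - 1); rewrite A1 Al1; lia.
lia.
Qed.

Lemma diagE i j : diag_index la i j = Rn + i - j.
Proof. by rewrite /diag_index la0. Qed.

Lemma FerBox k t : k <= n.+1 ->
  in_Fer la (AA k - t) (BB k - t) = [&& 0 < k, k <= n, t < AA k & t < BB k].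
Proof.
move=> hk; have [f1 f2 f3 f4] := factsA hk.
rewrite FerChar /BB.
case: (boolP ((t < AA k) && (t < Rn + AA k - k))) => [/andP [h1 h2]|hn].
  have -> : Rn + (AA k - t) - (Rn + AA k - k - t) = k by lia.
  rewrite ?andbT.
  apply/idP/idP => [/and5P [_ _ h3 h4 _]|/andP [h3 h4]]; first by apply/andP; split; lia.
  by apply/and5P; split; lia.
rewrite !andbF; apply/negbTE/negP => /and5P [h1 h2 _ _ _]; move: hn; rewrite negb_and; lia.
Qed.

Lemma FerInv i j : in_Fer la i j ->
  exists k t, [/\ 0 < k, k <= n, t < AA k & t < BB k] /\ (i = AA k - t /\ j = BB k - t).
Proof.
rewrite FerChar => /and5P [h1 h2 h3 h4 h5].
move Ek : (Rn + i - j) => k in h4 h5.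
have [f1 f2 f3 f4] := factsA (leqW h4).
exists k, (AA k - i); rewrite /BB; (split; [split|split]); lia.
Qed.

Lemma deltaE k : 0 < k <= n -> delta_k la k = minn (AA k) (BB k).
Proof.
move=> /andP [k0 kn]; have [f1 f2 f3 f4] := factsA (leqW kn).
have f5 := Rbig2 kn.
rewrite /delta_k; apply/eqP; rewrite eqn_leq; apply/andP; split.
  apply/bigmax_leqP => i _; apply/bigmax_leqP => j /eqP hd.
  have hF : in_Fer la i.+1 j.+1 by rewrite /in_Fer /=; exact: ltn_ord.
  move: hF; rewrite FerChar diagE in hd *; rewrite hd => /and5P [_ _ h1 h2 h3].
  rewrite /BB; lia.
have hA : 0 < AA k by have := Amono k0; rewrite A1.
have hi0 : (AA k).-1 < size la by rewrite size_la; lia.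
have hF := FerBox 0 (leqW kn); rewrite !subn0 k0 kn hA /= in hF.
have hB : 0 < BB k by rewrite /BB; lia.
move: hF; rewrite hB => /andP [_ hj].
have hj0 : (BB k).-1 < nth 0 la (Ordinal hi0) by rewrite /=; move: hj; lia.
apply: (bigmax_sup (Ordinal hi0)) => //.
apply: (bigmax_sup (Ordinal hj0)); rewrite /diag_index; have E := la0; rewrite /= in E *.
  apply/eqP; rewrite /BB; lia.
rewrite /BB; lia.
Qed.

Lemma PhiBox pi k t : k <= n.+1 -> Phi_c c pi (AA k - t) (BB k - t) =
  if [&& 0 < k, k <= n, t < AA k & t < BB k] then nth 0 (pi_at pi k) t else 0.
Proof.
move=> hk; rewrite /Phi_c FerBox //.
case: ifP => // /and4P [k0 kn h1 h2].
have [f1 f2 f3 f4] := factsA hk.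
have e : Rn + (AA k - t) - (BB k - t) = k by move: h2; rewrite /BB; lia.
rewrite /box_k /box_delta !diagE e deltaE ?k0 ?kn //.
congr (nth 0 _ _); lia.
Qed.


Lemma Fer_down i j i' j' : in_Fer la i' j' -> 0 < i <= i' -> 0 < j <= j' -> in_Fer la i j.
Proof.
rewrite !FerChar => /and5P [h1 h2 h3 h4 h5] /andP [i0 ii] /andP [j0 jj].
move Ek' : (Rn + i' - j') => k' in h4 h5.
have [f1 f2 f3 f4] := factsA (leqW h4).
have hk : Rn + i - j <= n by lia.
have h6 : i <= AA (Rn + i - j).
  case: (leqP k' (Rn + i - j)) => h; [have := Amono h | have := Alip2 (ltnW h)]; lia.
apply/and5P; split => //; lia.
Qed.

Definition Rel (pi : n.-tuple (seq nat)) k := if inL c k.+1 then storable (pi_at pi k.+1) (pi_at pi k)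
  else storable (pi_at pi k) (pi_at pi k.+1).

Lemma ST_Rel pi : in_ST c pi -> forall k, k <= n -> Rel pi k.
Proof.
case=> _ [HS _] k kn; rewrite /Rel.
case: (posnP k) => [->|k0].
  have := HS 1 ltac:(lia); move=> /= [_ [_ [H3 H4]]].
  rewrite HL1; case: (boolP (inR c 2)) => h.
    by case: (H4 HL1 h).
  by case: (H3 HL1 h).
have := HS k ltac:(lia); move=> /= [H1 [H2 [H3 H4]]].
have R1 : inR c k.+1 = ~~ inL c k.+1 by apply: HLR; lia.
case Lk: (inL c k); case Lk1: (inL c k.+1); rewrite Lk1 /= in R1.
- by case: (H3 Lk (negbT R1)).
- by case: (H4 Lk R1).
- by case: (H1 (negbT Lk) (negbT R1)).
- by case: (H2 (negbT Lk) R1).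
Qed.

Lemma headL : head 0 (Lseq c) = 1.
Proof. by rewrite /Lseq /= HL1. Qed.

Lemma lastR : last 0 (Rseq c) = n.+1.
Proof. by rewrite /Rseq iota1S filter_rcons HRN last_rcons. Qed.

Lemma Rel_ST pi : (forall k, 1 <= k <= n -> is_partition (pi_at pi k)) ->
  (forall k, k <= n -> Rel pi k) -> in_ST c pi.
Proof.
move=> HP HR; split => //; split.
  move=> i /andP [i1 iN] /=.
  have R0 := HR i.-1 ltac:(lia); have R1 := HR i iN.
  rewrite /Rel prednK // in R0; rewrite /Rel in R1.
  rewrite (HLR (x := i.+1)); last lia.
  rewrite /st_pp /st_pm /st_mp /st_mm.
  move: R0 R1; case: (inL c i); case: (inL c i.+1) => /= R0 R1;
    (split; [|split; [|split]]) => // _ _; by split.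
move=> k hk; rewrite headL lastR => /negP H; exfalso; apply: H; lia.
Qed.

Lemma pi_pos pi : in_ST c pi -> forall k, all (fun x => 0 < x) (pi_at pi k).
Proof.
case=> HP _ k.
case: (posnP k) => [->//|k0].
case: (leqP k n) => kn.
  by case/andP: (HP k ltac:(lia)).
by rewrite /pi_at; case: k k0 kn => // k _ kn; rewrite nth_default // size_tuple.
Qed.

Lemma pi_atN (pi : n.-tuple (seq nat)) : pi_at pi n.+1 = [::].
Proof. by rewrite /pi_at nth_default // size_tuple. Qed.

Lemma size_boundA pi : in_ST c pi -> forall k, k <= n.+1 -> size (pi_at pi k) <= AA k.
Proof.
move=> HST; elim=> [|k IH] hk; first by [].
have R := ST_Rel HST (k := k) ltac:(lia).
have IH' := IH ltac:(lia).
have P1 := pi_pos HST k.+1.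
rewrite /Rel AS in R *; case: (inL c k.+1) R => /= R; change (nth [::] pi k) with (pi_at pi k.+1) in *.
  have := (R (size (pi_at pi k))).2; rewrite (nth_default 0 (leqnn _)) leqn0 => /eqP E.
  have := size_le_nth P1 E; lia.
have := (R (size (pi_at pi k))).1; rewrite (nth_default 0 (leqnn _)) leqn0 => /eqP E.
have := size_le_nth P1 E; lia.
Qed.

Lemma size_boundB pi : in_ST c pi -> forall k, k <= n.+1 -> size (pi_at pi k) <= BB k.
Proof.
move=> HST.
suff H : forall d, d <= n.+1 -> size (pi_at pi (n.+1 - d)) <= BB (n.+1 - d).
  move=> k hk; have := H (n.+1 - k) ltac:(lia); by rewrite subKn.
elim=> [|d IH] hd; first by rewrite subn0 pi_atN.
have e : n.+1 - d = (n - d).+1 by lia.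
have IH' := IH ltac:(lia); rewrite e in IH'.
have e2 : n.+1 - d.+1 = n - d by lia.
rewrite e2.
have R := ST_Rel HST (k := n - d) ltac:(lia).
have P0 := pi_pos HST (n - d).
have [f1 f2 f3 f4] := factsA (k := n - d) ltac:(lia).
have f5 := Rbig2 (k := n - d) ltac:(lia).
move: IH'; rewrite /BB AS.
rewrite /Rel in R; case: (inL c (n - d).+1) R => /= R IH'; change (nth [::] pi (n - d)) with (pi_at pi (n - d).+1) in *.
  have := (R (size (pi_at pi (n - d).+1))).1; rewrite (nth_default 0 (leqnn _)) leqn0 => /eqP E.
  have := size_le_nth P0 E; lia.
have := (R (size (pi_at pi (n - d).+1))).2; rewrite (nth_default 0 (leqnn _)) leqn0 => /eqP E.
have := size_le_nth P0 E; lia.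
Qed.

Lemma part2 pi pi' : in_ST c pi -> in_ST c pi' -> Phi_c c pi = Phi_c c pi' -> pi = pi'.
Proof.
move=> H H' E.
apply: eq_from_tnth => i; rewrite !(tnth_nth [::]).
change (pi_at pi i.+1 = pi_at pi' i.+1).
have hk : i.+1 <= n by exact: ltn_ord.
apply: pos_eq; [exact: pi_pos | exact: pi_pos | move=> t].
case: (boolP ((t < AA i.+1) && (t < BB i.+1))) => [/andP [h1 h2]|hn].
  have hk1 : i.+1 <= n.+1 by exact: leqW.
  by have := congr1 (fun g => g (AA i.+1 - t) (BB i.+1 - t)) E; rewrite /= !PhiBox // hk h1 h2.
have := size_boundA H (leqW hk); have := size_boundB H (leqW hk).
have := size_boundA H' (leqW hk); have := size_boundB H' (leqW hk).
move=> a1 a2 a3 a4.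
rewrite !nth_default //; move: hn; rewrite negb_and; lia.
Qed.

Lemma part1 pi : in_ST c pi -> is_RPP la (Phi_c c pi).
Proof.
move=> HST; apply: RPP_of_adj.
- by move=> i j /negbTE H; rewrite /Phi_c H.
- exact: Fer_down.
- move=> i j F1 F2.
  have [k [t [[k0 kn h1 h2] [Ei Ej]]]] := FerInv F1.
  have [k2 [t2 [[k20 k2n h21 h22] [Ei2 Ej2]]]] := FerInv F2.
  have [f1 f2 f3 f4] := factsA (leqW kn).
  have [g1 g2 g3 g4] := factsA (leqW k2n).
  have e : k2 = k.+1 by move: Ei Ej Ei2 Ej2 h2 h22; rewrite /BB; lia.
  subst k2.
  have -> : Phi_c c pi i.+1 j = Phi_c c pi (AA k.+1 - t2) (BB k.+1 - t2) by rewrite -Ei2 -Ej2.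
  have -> : Phi_c c pi i j = Phi_c c pi (AA k - t) (BB k - t) by rewrite -Ei -Ej.
  rewrite !PhiBox ?k0 ?kn ?h1 ?h2 ?k20 ?k2n ?h21 ?h22 //; try exact: leqW.
  have R := ST_Rel HST kn.
  move: (AS k); rewrite /Rel in R; case: (inL c k.+1) R => /= R HA.
    have -> : t2 = t by lia.
    exact: (R t).1.
  have -> : t = t2.+1 by lia.
  exact: (R t2).2.
- move=> i j F1 F2.
  have [k [t [[k0 kn h1 h2] [Ei Ej]]]] := FerInv F1.
  have [k2 [t2 [[k20 k2n h21 h22] [Ei2 Ej2]]]] := FerInv F2.
  have [f1 f2 f3 f4] := factsA (leqW kn).
  have [g1 g2 g3 g4] := factsA (leqW k2n).
  have e : k = k2.+1 by move: Ei Ej Ei2 Ej2 h2 h22; rewrite /BB; lia.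
  subst k.
  have -> : Phi_c c pi i j.+1 = Phi_c c pi (AA k2 - t2) (BB k2 - t2) by rewrite -Ei2 -Ej2.
  have -> : Phi_c c pi i j = Phi_c c pi (AA k2.+1 - t) (BB k2.+1 - t) by rewrite -Ei -Ej.
  rewrite !PhiBox ?k0 ?kn ?h1 ?h2 ?k20 ?k2n ?h21 ?h22 //; try exact: leqW.
  have R := ST_Rel HST k2n.
  move: (AS k2); rewrite /Rel in R; case: (inL c k2.+1) R => /= R HA.
    have -> : t = t2.+1 by lia.
    exact: (R t2).2.
  have -> : t2 = t by lia.
  exact: (R t).1.
Qed.

Section Surj.
Variable f : nat -> nat -> nat.
Hypothesis Hf : is_RPP la f.

Lemma RPP_le i j i' j' : i <= i' -> j <= j' -> (in_Fer la i j -> in_Fer la i' j') ->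
  f i j <= f i' j'.
Proof.
move=> hi hj HF; case: (boolP (in_Fer la i j)) => F.
  exact: Hf.2 F (HF F) hi hj.
by rewrite Hf.1.
Qed.

Definition vv k t := f (AA k - t) (BB k - t).

Lemma v_anti k t t' : k <= n.+1 -> t <= t' -> vv k t' <= vv k t.
Proof.
move=> hk ht; apply: RPP_le; rewrite ?FerBox //; try lia.
Qed.

Lemma v_zero k t : k <= n.+1 -> ~~ [&& 0 < k, k <= n, t < AA k & t < BB k] -> vv k t = 0.
Proof. by move=> hk H; rewrite /vv Hf.1 // FerBox. Qed.

Definition mm k := find (fun t => vv k t == 0) (iota 0 (AA k)).
Definition pik k := mkseq (vv k) (mm k).

Lemma mm_le k : mm k <= AA k.
Proof. by rewrite /mm -{2}(size_iota 0 (AA k)) find_size. Qed.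

Lemma nth_pik k t : k <= n.+1 -> nth 0 (pik k) t = vv k t.
Proof.
move=> hk; case: (ltnP t (mm k)) => h; first by rewrite nth_mkseq.
rewrite nth_default ?size_mkseq //.
case: (ltnP (mm k) (AA k)) => h2.
  have hh : has (fun t => vv k t == 0) (iota 0 (AA k)) by rewrite has_find size_iota.
  have := nth_find 0 hh; rewrite -/(mm k) nth_iota // add0n => /eqP E.
  by have := v_anti hk h; rewrite E leqn0 => /eqP ->.
by rewrite v_zero //; apply/negP => /and4P [_ _ h3 _]; lia.
Qed.

Lemma pik_part k : k <= n.+1 -> is_partition (pik k).
Proof.
move=> hk; apply/andP; split.
  apply/(sortedP 0) => t ht; rewrite !nth_pik //; exact: v_anti.
apply/allP => x; rewrite /pik /mkseq => /mapP [t]; rewrite mem_iota => /andP [_ ht] ->.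
have ht' : t < mm k by rewrite add0n in ht.
have := before_find 0 ht'; rewrite nth_iota ?add0n; last exact: leq_trans ht' (mm_le k).
by rewrite lt0n => ->.
Qed.

Definition pit : n.-tuple (seq nat) := [tuple pik i.+1 | i < n].

Lemma pit_at k t : k <= n.+1 -> nth 0 (pi_at pit k) t = vv k t.
Proof.
move=> hk; case: (posnP k) => [->|k0].
  by rewrite v_zero // nth_nil.
case: (leqP k n) => kn.
  rewrite /pi_at; case: k k0 kn hk => // k _ kn hk.
  by rewrite (nth_mktuple _ _ (Ordinal kn)) nth_pik.
have -> : k = n.+1 by lia.
by rewrite pi_atN nth_nil v_zero // ltnn andbF.
Qed.

Lemma part3 : exists pi, in_ST c pi /\ Phi_c c pi = f.
Proof.
exists pit; split.
  apply: Rel_ST.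
    move=> k /andP [k1 kn]; rewrite /pi_at; case: k k1 kn => // k _ hk.
    rewrite (nth_mktuple _ _ (Ordinal hk)); apply: pik_part => /=; exact: leqW.
  move=> k kn; rewrite /Rel.
  have [f1 f2 f3 f4] := factsA (leqW kn).
  have f5 := Rbig2 kn.
  have [g1 g2 g3 g4] := factsA (k := k.+1) ltac:(lia).
  have f6 := Ale k.
  have HA := AS k.
  case Lk: (inL c k.+1) => t; rewrite !pit_at //; try lia; rewrite /vv.
    have kn1 : k.+1 <= n by rewrite ltn_neqAle kn andbT; apply/negP => /eqP E; move: Lk; rewrite E LN.
    rewrite Lk in HA.
    split; (apply: RPP_le; rewrite ?FerBox //; try lia;
      [rewrite /BB; lia | move/and4P => [h1 h2 h3 h4]; apply/and4P; rewrite /BB in h4 *; split; lia]).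
  have k0 : 0 < k by case: (posnP k) Lk => // ->; rewrite HL1.
  rewrite Lk in HA.
  split; (apply: RPP_le; rewrite ?FerBox //; try lia;
    [rewrite /BB; lia | move/and4P => [h1 h2 h3 h4]; apply/and4P; rewrite /BB in h4 *; split; lia]).
apply: functional_extensionality => i; apply: functional_extensionality => j.
case: (boolP (in_Fer la i j)) => F.
  have [k [t [[k0 kn h1 h2] [-> ->]]]] := FerInv F.
  by rewrite PhiBox ?(leqW kn) // k0 kn h1 h2 pit_at // leqW.
by rewrite /Phi_c (negbTE F) Hf.1.
Qed.
End Surj.
End Comb.

Theorem theorem4p11 (n : nat) (c : 'S_(n.+1)) :
  0 < n -> coxeter_element c ->
  (forall pi, in_ST c pi -> is_RPP (lambda_c c) (Phi_c c pi)) /\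
  (forall pi pi', in_ST c pi -> in_ST c pi' -> Phi_c c pi = Phi_c c pi' -> pi = pi') /\
  (forall f, is_RPP (lambda_c c) f -> exists pi, in_ST c pi /\ Phi_c c pi = f).
Proof.
move=> n0 Hc.
have [Hall Hcard] := cox_single Hc.
have [m hm Em] := iter_max_ex n0 Hall Hcard.
have HLR := LR_compl n0 Hall Hcard hm Em.
have HL1 := inL1 n0 Hcard hm Em.
have HRN := inRN n0 Hcard hm Em.
split; [|split].
- move=> pi; exact: part1 n0 HLR HL1 HRN pi.
- move=> pi pi'; exact: part2 n0 HLR HL1 HRN pi pi'.
- move=> f; exact: part3 n0 HLR HL1 HRN f.
Qed.
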